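(* Let $n\in\mathbb{N}$. Then the number $N_n$ of distinct $n\times n$ principal reversible squares equals $1$ if and only if $n$ is prime.
   Context: A reversible square matrix is a real matrix $M=(M_{i,j})$ with indices $i,j\in\mathbb{Z}_n=\mathbb{Z}/n\mathbb{Z}$ (top-left entry index $(1,1)$, indices computed modulo $n$) such that (R) $M_{i,j}+M_{i,n+1-j}=M_{i,k}+M_{i,n+1-k}$ and $M_{i,j}+M_{n+1-i,j}=M_{k,j}+M_{n+1-k,j}$ for all $i,j,k$, and (V) $M_{i,j}+M_{k,l}=M_{i,l}+M_{k,j}$ for all $i,j,k,l$. An $n\times n$ principal reversible square is a reversible square matrix whose set of entries is exactly $\{1,\dots,n^2\}$, whose entries increase along each row and each column, and with $M_{1,1}=1$, $M_{1,2}=2$. *)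

(* Defs.v *)
From mathcomp Require Import all_boot all_order all_algebra.
From mathcomp Require Import boolp.
Set Implicit Arguments. Unset Strict Implicit. Unset Printing Implicit Defensive.

(* Indices: the paper's 1-based index i in Z_n is the 0-based i - 1 : 'I_n.
   The paper's reflection n+1-j (1-based) is rev_ord j (value n-1-j, 0-based). *)

Definition rev_rows_cols (n : nat) (M : 'M[nat]_n) : Prop :=
  (forall i j k : 'I_n, M i j + M i (rev_ord j) = M i k + M i (rev_ord k)) /\
  (forall i j k : 'I_n, M i j + M (rev_ord i) j = M k j + M (rev_ord k) j).

Definition vertex_cond (n : nat) (M : 'M[nat]_n) : Prop :=
  forall i j k l : 'I_n, M i j + M k l = M i l + M k j.

Definition reversible_square (n : nat) (M : 'M[nat]_n) : Prop :=
  rev_rows_cols M /\ vertex_cond M.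

Definition principal_reversible_square (n : nat) (M : 'M[nat]_n) : Prop :=
  [/\ reversible_square M,
      (forall v : nat, (exists i j : 'I_n, M i j = v) <-> (1 <= v <= n * n)),
      (forall (i j k : 'I_n), j < k -> M i j < M i k),
      (forall (i j k : 'I_n), i < j -> M i k < M j k) &
      (* M_{1,1} = 1 and M_{1,2} = 2, with column index 2 taken modulo n *)
      (exists o t : 'I_n, [/\ val o = 0, val t = 1 %% n, M o o = 1 & M o t = 2])].

(* N_n : every principal square has entries in {1..n^2}, so principal squares
   correspond bijectively to the matrices over 'I_(n*n).+1 whose
   nat-valued image is principal. *)
Definition N_count (n : nat) : nat :=
  #|[pred M : 'M['I_(n * n).+1]_n |
      `[< principal_reversible_square (map_mx (fun x : 'I_(n * n).+1 => nat_of_ord x) M) >]]|.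

(* Main.v *)
From mathcomp Require Import all_boot all_order all_algebra zify.
From mathcomp Require Import boolp.
Require Import Defs.
Set Implicit Arguments. Unset Strict Implicit. Unset Printing Implicit Defensive.

Lemma divmodU (Q R k : nat) : R < k -> (Q * k + R) %/ k = Q /\ (Q * k + R) %% k = R.
Proof.
move=> Rk; have k0 : 0 < k by lia.
split; first by rewrite divnMDl // divn_small // addn0.
by rewrite modnMDl modn_small.
Qed.

Lemma block (A B : nat -> Prop) (N k : nat)
  (inj : forall a a' b b', A a -> A a' -> B b -> B b' -> a + b = a' + b' -> a = a')
  (cover : forall x, x < N -> exists a b, [/\ A a, B b & x = a + b])
  (bound : forall a b, A a -> B b -> a + b < N)
  (A0 : A 0) (B0 : B 0) (Ak : A k) (k0 : 0 < k)
  (gap : forall x, 0 < x < k -> ~ A x) :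
  (forall x, x < k -> B x) /\
  forall y, (A y -> k %| y) /\ (y < N -> (B y <-> B (y %/ k * k))).
Proof.
have low : forall x, x < k -> B x.
  move=> x xk; have kN := bound _ _ Ak B0.
  have [a [b [Aa Bb e]]] := cover x ltac:(lia).
  case: (posnP a) => [a0|ap]; first by subst; rewrite add0n in Bb *.
  by case: (gap a) => //; apply/andP; split; lia.
split => //.
elim/ltn_ind => y IH.
have ey := divn_eq y k; set q := y %/ k in ey *; set r := y %% k in ey *.
have rk : r < k by rewrite /r ltn_mod.
have dvdq : forall c, k %| c -> exists d, c = d * k by move=> c /dvdnP.
have part1 : A y -> k %| y.
  move=> Ay.
  case: (posnP r) => [r0|rp]; first by rewrite ey r0 addn0 dvdn_mull.
  have yN := bound _ _ Ay B0; rewrite addn0 in yN.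
  have [a [b [Aa Bb e]]] := cover (q * k) ltac:(lia).
  have [c ec] : exists c, a = c * k by apply: dvdq; apply: (IH a _).1 => //; lia.
  have eb : b = (q - c) * k by rewrite mulnBl; lia.
  case: (posnP a) => [a0|ap].
    have := inj _ _ _ _ Ak Ay Bb (low (k - r) ltac:(lia)); rewrite a0 add0n in e.
    move=> H; have -> : y = k by apply/esym/H; lia.
    exact: dvdnn.
  have Bbr : B (b + r).
    have := (IH (b + r) ltac:(lia)).2 ltac:(lia).
    rewrite {2}eb; have [-> _] := divmodU (q - c) rk; rewrite -eb => H; exact/H.
  have := inj _ _ _ _ Aa Ay Bbr B0; lia.
split => // yN.
case: (posnP r) => [r0|rp]; first by rewrite {1}ey r0 addn0.
split.
- move=> By.
  have [a [b [Aa Bb e]]] := cover (q * k) ltac:(lia).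
  have [c ec] : exists c, a = c * k by apply: dvdq; apply: (IH a _).1 => //; lia.
  have eb : b = (q - c) * k by rewrite mulnBl; lia.
  case: (posnP a) => [a0|ap]; first by rewrite e a0.
  have Bbr : B (b + r).
    have := (IH (b + r) ltac:(lia)).2 ltac:(lia).
    rewrite {2}eb; have [-> _] := divmodU (q - c) rk; rewrite -eb => H; exact/H.
  have := inj _ _ _ _ Aa A0 Bbr By; lia.
- move=> Bq.
  have [a [b [Aa Bb e]]] := cover y yN.
  case: (posnP a) => [a0|ap]; first by rewrite e a0.
  case: (ltnP a y) => ay; last first.
    have ya : a = y by lia.
    rewrite ya in Aa; have := part1 Aa; rewrite /dvdn -/r; lia.
  have [c ec] : exists c, a = c * k by apply: dvdq; apply: (IH a _).1 => //; lia.
  have eb := divn_eq b k; set qb := b %/ k in eb *; set rb := b %% k in eb *.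
  have rbk : rb < k by rewrite /rb ltn_mod.
  have [hq hr] := divmodU (c + qb) rbk.
  have ey' : y = (c + qb) * k + rb by rewrite mulnDl; lia.
  have qe : q = c + qb by rewrite /q ey' hq.
  have Bqb : B (qb * k) by apply/((IH b ltac:(lia)).2 ltac:(lia)).
  have := inj _ _ _ _ Aa A0 Bqb Bq; rewrite qe mulnDl; lia.
Qed.
Lemma kdvd (b : nat -> nat) (n N k : nat)
  (mono : forall i j, i < j -> j < n -> b i < b j)
  (b0 : b 0 = 0) (n0 : 0 < n) (k0 : 0 < k)
  (bN : forall j, j < n -> b j < N)
  (top : b n.-1 + 1 < N)
  (blk : forall y, y < N -> ((exists2 j, j < n & b j = y) <->
                             (exists2 j, j < n & b j = y %/ k * k))) :
  k %| n.
Proof.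
have monoinv : forall i j, i < n -> j < n -> b i < b j -> i < j.
  move=> i j iN jn bij; case: (ltnP i j) => // ji.
  rewrite leq_eqVlt in ji; case/orP: ji => [/eqP e|ji]; first by subst; lia.
  have := mono _ _ ji iN; lia.
have next : forall m j, m.+1 < n -> j < n -> b m < b j -> b m.+1 <= b j.
  move=> m j mn jn bmj; have := monoinv m j ltac:(lia) jn bmj => mj.
  rewrite leq_eqVlt in mj; case/orP: mj => [/eqP <-|mj] //.
  by have := mono _ _ mj jn; lia.
have D : forall m, m < n -> b m %% k = m %% k.
  elim=> [|m IH] mn; first by rewrite b0 !mod0n.
  have IHm := IH ltac:(lia).
  have eb := divn_eq (b m) k; set Q := b m %/ k in eb.
  have em := divn_eq m k; set Qm := m %/ k in em.
  rewrite IHm in eb.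
  set R := m %% k in eb em.
  have Rk : R < k by rewrite /R ltn_mod.
  have hmon := mono m m.+1 (ltnSn m) mn.
  case: (ltnP R.+1 k) => HR.
    have [hq hr] := divmodU Q HR.
    have [hq' hr'] := divmodU Qm HR.
    have BQ : exists2 j, j < n & b j = Q * k.
      by apply/(blk (b m) (bN m ltac:(lia))).1; exists m => //; lia.
    have yN : b m + 1 < N by have := bN _ mn; lia.
    have [j jn bj] : exists2 j, j < n & b j = b m + 1.
      apply/(blk _ yN).2; have -> : b m + 1 = Q * k + R.+1 by lia.
      rewrite hq; exact: BQ.
    have := next m j mn jn ltac:(lia).
    move=> H; have -> : b m.+1 = Q * k + R.+1 by lia.
    rewrite hr; have -> : m.+1 = Qm * k + R.+1 by lia.
    by rewrite hr'.
  have Rk1 : R.+1 = k by lia.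
  have -> : m.+1 %% k = 0.
    have -> : m.+1 = Qm.+1 * k + 0 by rewrite mulSn; lia.
    by have [_ ->] := divmodU Qm.+1 k0.
  apply/eqP; rewrite -leqn0 leqNgt; apply/negP => rp.
  have ey := divn_eq (b m.+1) k; set Q' := b m.+1 %/ k in ey; set R' := b m.+1 %% k in ey rp.
  have [j jn bj] : exists2 j, j < n & b j = Q' * k.
    by apply/(blk _ (bN _ mn)).1; exists m.+1.
  have QQ : Q < Q'.
    rewrite ltnNge; apply/negP => h.
    have := leq_mul2r k Q' Q; rewrite h orbT => h2.
    have R'k : R' < k by rewrite /R' ltn_mod.
    lia.
  have h3 : Q.+1 * k <= Q' * k by rewrite leq_mul2r QQ orbT.
  rewrite mulSn in h3.
  have := monoinv m j ltac:(lia) jn ltac:(lia).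
  have := monoinv j m.+1 jn mn ltac:(lia).
  lia.
apply/dvdnP.
have en := divn_eq n k; set Qn := n %/ k in en; set s := n %% k in en.
case: (posnP s) => [s0|sp]; first by exists Qn; lia.
exfalso.
have sk : s < k by rewrite /s ltn_mod.
have Dn := D n.-1 ltac:(lia).
have [_ hr] := divmodU Qn (ltac:(lia) : s.-1 < k).
have : n.-1 = Qn * k + s.-1 by lia.
move=> e; have Dn' : b n.-1 %% k = s.-1 by rewrite Dn {1}e hr.
have eb := divn_eq (b n.-1) k; set Q := b n.-1 %/ k in eb; rewrite Dn' in eb.
have [hq _] := divmodU Q sk.
have BQ : exists2 j, j < n & b j = Q * k.
  by apply/(blk _ (bN n.-1 ltac:(lia))).1; exists n.-1 => //; lia.
have [j jn bj] : exists2 j, j < n & b j = b n.-1 + 1.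
  apply/(blk _ top).2; have -> : b n.-1 + 1 = Q * k + s by lia.
  by rewrite hq.
have := monoinv n.-1 j ltac:(lia) jn ltac:(lia).
lia.
Qed.

Lemma monoinvL (b : nat -> nat) (n : nat)
  (mono : forall i j, i < j -> j < n -> b i < b j) :
  forall i j, i < n -> j < n -> b i < b j -> i < j.
Proof.
  move=> i j iN jn bij; case: (ltnP i j) => // ji.
  rewrite leq_eqVlt in ji; case/orP: ji => [/eqP e|ji]; first by subst; lia.
  have := mono _ _ ji iN; lia.
Qed.

Lemma nextL (b : nat -> nat) (n : nat)
  (mono : forall i j, i < j -> j < n -> b i < b j) :
  forall m j, m.+1 < n -> j < n -> b m < b j -> b m.+1 <= b j.
Proof.
  move=> m j mn jn bmj; have := @monoinvL b n mono m j ltac:(lia) jn bmj => mj.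
  rewrite leq_eqVlt in mj; case/orP: mj => [/eqP <-|mj] //.
  by have := mono _ _ mj jn; lia.
Qed.

Lemma uniq_prime (n : nat) (M : 'M[nat]_n.+1) : prime n.+1 ->
  principal_reversible_square M -> forall i j : 'I_n.+1, M i j = n.+1 * i + j + 1.
Proof.
move=> pn [[_ Hv] Hset Hrow Hcol [o [t [vo vt Moo Mot]]]].
have m1 : 1 < n.+1 by case/primeP: pn.
have n1 : 0 < n by [].
have oE : o = ord0 by apply: val_inj.
have tE : t = inord 1 by apply: val_inj; rewrite /= inordK ?vt ?modn_small.
subst o t.
have Mb : forall i j, 1 <= M i j <= n.+1 * n.+1 by move=> i j; apply/(Hset _).1; exists i, j.
have Mdec : forall i j, M i j + 1 = M i ord0 + M ord0 j.
  by move=> i j; rewrite -Moo Hv.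
pose a x := M (inord x) ord0 - 1.
pose b x := M ord0 (inord x) - 1.
have ME : forall i j : 'I_n.+1, M i j = a i + b j + 1.
  move=> i j; rewrite /a /b !inord_val; have := Mdec i j; have := Mb i ord0; have := Mb ord0 j; lia.
have Minj : injective (fun p : 'I_n.+1 * 'I_n.+1 => M p.1 p.2).
  apply/injectiveP; rewrite /injectiveb /dinjectiveb.
  apply: (@leq_size_uniq _ (iota 1 (n.+1 * n.+1))); first exact: iota_uniq.
    move=> x; rewrite mem_iota => hx.
    have [i [j hij]] : exists i j, M i j = x by apply/(Hset x).2; lia.
    by apply/mapP; exists (i, j); rewrite ?mem_enum.
  by rewrite size_map size_iota -cardE card_prod card_ord.
pose A y := exists2 i, i < n.+1 & a i = y.
pose B y := exists2 j, j < n.+1 & b j = y.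
have inj : forall x x' y y', A x -> A x' -> B y -> B y' -> x + y = x' + y' -> x = x'.
  move=> x x' y y' [i im <-] [i' im' <-] [j jm <-] [j' jm' <-] e.
  have := Minj (Ordinal im, Ordinal jm) (Ordinal im', Ordinal jm').
  rewrite /= !ME /= e => /(_ erefl) [->] //.
have cover : forall x, x < n.+1 * n.+1 -> exists x1 x2, [/\ A x1, B x2 & x = x1 + x2].
  move=> x xm; have [i [j hij]] : exists i j, M i j = x.+1.
    apply: (proj2 (Hset x.+1)); lia.
  exists (a i), (b j); split; [by exists i | by exists j | ]. have := ME i j. rewrite hij. lia.
have bound : forall x y, A x -> B y -> x + y < n.+1 * n.+1.
  move=> x y [i im <-] [j jm <-]; have := ME (Ordinal im) (Ordinal jm).
  have := Mb (Ordinal im) (Ordinal jm); move=> /= h1 h2; lia.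
have a0 : a 0 = 0 by rewrite /a (_ : inord 0 = ord0) ?Moo //; apply: val_inj; rewrite /= inordK.
have b0 : b 0 = 0 by rewrite /b (_ : inord 0 = ord0) ?Moo //; apply: val_inj; rewrite /= inordK.
have b1 : b 1 = 1 by rewrite /b Mot.
have amono : forall i j, i < j -> j < n.+1 -> a i < a j.
  move=> i j ij jm; have := Hcol (inord i) (inord j) ord0; rewrite !inordK; try lia.
  move=> /(_ ij); rewrite /a; have := Mb (inord i) ord0; lia.
have bmono : forall i j, i < j -> j < n.+1 -> b i < b j.
  move=> i j ij jm; have := Hrow ord0 (inord i) (inord j); rewrite !inordK; try lia.
  move=> /(_ ij); rewrite /b; have := Mb ord0 (inord i); lia.
set k := a 1.
have k0 : 0 < k by have := amono 0 1 erefl m1; lia.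
have Aj : forall j, j < n.+1 -> A (a j) by move=> j jm; exists j.
have Bj : forall j, j < n.+1 -> B (b j) by move=> j jm; exists j.
have A0 : A 0 by exists 0.
have B0 : B 0 by exists 0.
have Ak : A k by exists 1.
have gap : forall x, 0 < x < k -> ~ A x.
  move=> x hx [i im ex]; case: i im ex => [|i] im ex; first by lia.
  case: i im ex => [|i] im ex; first by rewrite -/k in ex; lia.
  have := amono 1 i.+2 erefl im; lia.
have [low blk] := block inj cover bound A0 B0 Ak k0 gap.
have km : n.+1 <= k.
  rewrite leqNgt; apply/negP => km.
  have : k %| n.+1.
    apply: (@kdvd b n.+1 (n.+1 * n.+1)) => //.
    - by move=> j jm; have := bound 0 (b j) A0 (Bj j jm); lia.
    - by have := bound k (b n.+1.-1) Ak (Bj n.+1.-1 ltac:(lia)); lia.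
    - by move=> y ym; apply: (blk y).2.
  case/primeP: pn => _ /[apply] /orP [] /eqP k1; last by lia.
  have := inj k 0 0 1 Ak A0 B0 ltac:(rewrite -b1; exact: Bj 1 m1); lia.
have bid : forall j, j < n.+1 -> b j = j.
  elim=> [|j IH] jm; first by [].
  have [j' j'm bj'] := low j.+1 ltac:(lia).
  have bjj := IH ltac:(lia).
  have := @nextL b n.+1 bmono j j' jm j'm ltac:(lia).
  have := bmono j j.+1 (ltnSn j) jm; lia.
have agap : forall i, i.+1 < n.+1 -> a i + n.+1 <= a i.+1.
  move=> i im; rewrite leqNgt; apply/negP => h.
  have := amono i i.+1 (ltnSn i) im => h2.
  set d := a i.+1 - a i.
  have := inj (a i.+1) (a i) 0 (b d) (Aj _ im) (Aj i ltac:(lia))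
     B0 (Bj d ltac:(lia)).
  rewrite bid; lia.
have alow : forall d i, i + d < n.+1 -> a i + n.+1 * d <= a (i + d).
  elim=> [|d IH] i id; first by rewrite muln0 addn0 addn0.
  have := IH i ltac:(lia); have := agap (i + d) ltac:(lia).
  have e : n.+1 * d.+1 = n.+1 * d + n.+1 by rewrite mulnS addnC.
  have e2 : i + d.+1 = (i + d).+1 by lia.
  rewrite e e2; lia.
have atop : a n.+1.-1 + n.+1.-1 < n.+1 * n.+1.
  have := bound (a n.+1.-1) (b n.+1.-1) (Aj n.+1.-1 ltac:(lia)) (Bj n.+1.-1 ltac:(lia)).
  by rewrite bid; lia.
have aid : forall i, i < n.+1 -> a i = n.+1 * i.
  move=> i im.
  have h1 := alow i 0 ltac:(lia); rewrite a0 !add0n in h1.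
  have h2 := alow (n.+1.-1 - i) i ltac:(lia).
  have e1 : i + (n.+1.-1 - i) = n.+1.-1 by lia.
  rewrite e1 in h2.
  have e2 : n.+1 * (n.+1.-1 - i) + n.+1 * i = n.+1 * n.+1.-1 by rewrite -mulnDr; congr (_ * _); lia.
  have e3 : n.+1 * n.+1.-1 + n.+1 = n.+1 * n.+1 by rewrite -mulnSr; congr (_ * _); lia.
  lia.
move=> i j; rewrite ME aid // bid //.
Qed.

Definition Fm (p n i j : nat) := p * i + j %% p + p * n * (j %/ p) + 1.

Lemma exist_sq (n p q : nat) : 1 < p -> 0 < q -> n = p * q ->
  principal_reversible_square (\matrix_(i < n, j < n) Fm p n i j).
Proof.
move=> p1 q0 en.
have p0 : 0 < p by lia.
have n2 : 1 < n by nia.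
have decomp : forall j, j < n -> exists u v,
    [/\ j = u * p + v, v < p, u < q, j %/ p = u & j %% p = v].
  move=> j jn; exists (j %/ p), (j %% p); split => //; first exact: divn_eq.
    by rewrite ltn_mod.
  by rewrite ltn_divLR // mulnC -en.
have gsym : forall j, j < n -> j %% p + p * n * (j %/ p) +
    ((n - j.+1) %% p + p * n * ((n - j.+1) %/ p)) = p.-1 + p * n * q.-1.
  move=> j jn; have [u [v [ej vp uq -> ->]]] := decomp j jn.
  have e1 : (q.-1 - u) * p = q.-1 * p - u * p by rewrite mulnBl.
  have e2 : q.-1 * p + p = q * p by rewrite -mulSnr; congr (_ * _); lia.
  have e3 : u * p <= q.-1 * p by rewrite leq_mul2r; apply/orP; right; lia.
  have e : n - j.+1 = (q.-1 - u) * p + (p.-1 - v) by rewrite en mulnC; lia.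
  rewrite e; have [-> ->] := divmodU (q.-1 - u) (ltac:(lia) : p.-1 - v < p).
  have e4 : p * n * (q.-1 - u) + p * n * u = p * n * q.-1 by rewrite -mulnDr; congr (_ * _); lia.
  lia.
split.
- split; first split.
  + move=> i j k; rewrite !mxE /Fm /=.
    have := gsym j (ltn_ord j); have := gsym k (ltn_ord k); lia.
  + move=> i j k; rewrite !mxE /Fm /=.
    have hc : forall i, i < n -> p * i + p * (n - i.+1) = p * n.-1.
      by move=> i' ii; rewrite -mulnDr; congr (_ * _); lia.
    have := hc i (ltn_ord i); have := hc k (ltn_ord k); lia.
  + by move=> i j k l; rewrite !mxE /Fm; lia.
- move=> v; split.
  + case=> i [j <-]; rewrite mxE /Fm.
    have [u [w [ej wp uq -> ->]]] := decomp j (ltn_ord j).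
    have h1 : p * i <= p * n.-1 by rewrite leq_mul2l; apply/orP; right; have := ltn_ord i; lia.
    have h2 : p * n * u <= p * n * q.-1 by rewrite leq_mul2l; apply/orP; right; lia.
    have h3 : p * n.-1 + p = p * n by rewrite -mulnSr; congr (_ * _); lia.
    have h4 : p * n * q.-1 + p * n = n * n by rewrite -mulnSr prednK // en; lia.
    apply/andP; split; lia.
  + move=> /andP [v1 vn].
    set x := v.-1.
    have ex := divn_eq x p; set w := x %/ p in ex; set r := x %% p in ex.
    have rp : r < p by rewrite /r ltn_mod.
    have wn : w < q * n by rewrite /w ltn_divLR //; rewrite /x; nia.
    have ew := divn_eq w n; set u := w %/ n in ew; set i := w %% n in ew.
    have iN : i < n by rewrite /i ltn_mod; lia.
    have uq : u < q by rewrite /u ltn_divLR //; lia.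
    have jn : u * p + r < n.
      have : u.+1 * p <= q * p by rewrite leq_mul2r; apply/orP; right.
      rewrite mulSn en mulnC; lia.
    exists (Ordinal iN), (Ordinal jn); rewrite mxE /Fm /=.
    have [-> ->] := divmodU u rp.
    rewrite /x in ex; lia.
- move=> i j k jk; rewrite !mxE /Fm.
  have [u [w [ej wp uq -> ->]]] := decomp j (ltn_ord j).
  have [u' [w' [ek wp' uq' -> ->]]] := decomp k (ltn_ord k).
  have pn : p <= p * n by rewrite leq_pmulr; lia.
  case: (ltngtP u u') => h.
  + have : p * n * u.+1 <= p * n * u' by rewrite leq_mul2l h orbT.
    rewrite mulnS; lia.
  + have : u'.+1 * p <= u * p by rewrite leq_mul2r h orbT.
    rewrite mulSn; lia.
  + subst u'; lia.
- move=> i j k ij; rewrite !mxE /Fm.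
  have : p * i < p * j by rewrite ltn_pmul2l.
  lia.
- exists (Ordinal (ltac:(lia) : 0 < n)), (Ordinal n2); split => //=.
  + by rewrite modn_small.
  + by rewrite mxE /Fm /= mod0n div0n !muln0.
  + by rewrite mxE /Fm /= modn_small // divn_small // !muln0.
Qed.

Definition liftM (n p : nat) : 'M['I_(n * n).+1]_n := \matrix_(i, j) inord (Fm p n i j).

Lemma liftE (n p q : nat) : 1 < p -> 0 < q -> n = p * q ->
  map_mx (fun x : 'I_(n * n).+1 => nat_of_ord x) (liftM n p) = (\matrix_(i < n, j < n) Fm p n i j)%R.
Proof.
move=> p1 q0 en; have := exist_sq p1 q0 en; case=> _ Hset _ _ _.
apply/matrixP => i j; rewrite !mxE inordK //.
have hb : 1 <= Fm p n i j <= n * n.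
  by apply: (Hset _).1; exists i, j; rewrite mxE.
by rewrite ltnS; case/andP: hb.
Qed.

Lemma liftP (n p q : nat) : 1 < p -> 0 < q -> n = p * q ->
  principal_reversible_square (map_mx (fun x : 'I_(n * n).+1 => nat_of_ord x) (liftM n p)).
Proof. by move=> p1 q0 en; rewrite (liftE p1 q0 en); exact: (exist_sq p1 q0 en). Qed.

Theorem corollary3 (n : nat) : N_count n = 1 <-> prime n.
Proof.
split.
- move=> H; case: (boolP (prime n)) => // np; exfalso.
  rewrite /N_count in H; have [M0 HM0] := mem_card1 H.
  case/primePn: np => [n2 | [d /andP[d1 dn] dd]].
  + have h := HM0 M0; rewrite !inE eqxx in h; move/asboolP: h => [_ _ _ _ [o [t [vo vt Moo Mot]]]].
    have n1 : n = 1 by have := ltn_ord o; lia.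
    have h : 1 %% n = 0 by rewrite n1.
    have ot : o = t by apply: val_inj; rewrite vo vt h.
    by move: Mot; rewrite -ot Moo.
  + have en := divnK dd; set q := n %/ d in en.
    have q2 : 1 < q by rewrite /q ltn_divRL //; lia.
    have e1 : n = n * 1 by rewrite muln1.
    have e2 : n = d * q by rewrite mulnC.
    have m1 : liftM n n = M0.
      apply/eqP; have := HM0 (liftM n n); rewrite !inE => <-; apply/asboolP.
      exact: (liftP (ltac:(lia) : 1 < n) (isT : 0 < 1) e1).
    have m2 : liftM n d = M0.
      apply/eqP; have := HM0 (liftM n d); rewrite !inE => <-; apply/asboolP.
      exact: (liftP d1 (ltac:(lia) : 0 < q) e2).
    have := congr1 (map_mx (fun x : 'I_(n * n).+1 => nat_of_ord x)) (etrans m1 (esym m2)).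
    rewrite (liftE (ltac:(lia) : 1 < n) (isT : 0 < 1) e1) (liftE d1 (ltac:(lia) : 0 < q) e2).
    move/matrixP => /(_ (Ordinal (ltac:(lia) : 0 < n)) (Ordinal dn)); rewrite !mxE /Fm /=.
    rewrite modn_small // divn_small // modnn divnn (ltac:(lia) : 0 < d) /=.
    nia.
- case: n => [//|m] pn.
  rewrite /N_count; apply: (@eq_card1 _ (liftM m.+1 m.+1)) => M.
  rewrite !inE; apply/idP/idP => [/asboolP HP|/eqP ->]; last first.
    by apply/asboolP; apply: (liftP (q := 1)) => //; [case/primeP: pn | rewrite muln1].
  apply/eqP.
  have E := liftE (q := 1) (ltac:(by case/primeP: pn) : 1 < m.+1) isT (esym (muln1 _)).
  apply/matrixP => i j; apply: val_inj; rewrite /liftM mxE.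
  have h1 := congr1 (fun A : 'M[nat]_m.+1 => A i j) E; rewrite /= /liftM !mxE in h1.
  have h2 := uniq_prime pn HP i j; rewrite mxE in h2.
  have h3 : Fm m.+1 m.+1 i j = m.+1 * i + j + 1.
    by rewrite /Fm modn_small // divn_small // muln0 addn0.
  apply: (etrans h2); rewrite -h3; exact: (esym h1).
Qed.
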